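(* A function $g\in\mathcal C$ satisfies $Tg=g$ if and only if $g\colon[0,1]\to[0,1]$ solves $-\gamma g'=g^{-1}$ for some $\gamma>0$ (with $g^{-1}$ the compositional inverse). In that case moreover: (a) $g\in\breve{\mathcal D}^\sharp$; (b) $\int g=\gamma$; (c) $\sigma(g)=\gamma$; (d) $g^*$ and $g'$ are continuously differentiable on $(0,1]$; (e) $g''(1)=1$ and $(g^* )'(1)=-\gamma$.
   Context: ''Decreasing'' means non-increasing; $\int f:=\int_0^1 f(x)\,dx$. $\mathcal E$: measurable decreasing $f\colon[0,1]\to[0,\infty)$ with $f(0)=1$ and $\int f>0$. $\mathcal C$: continuous $f\in\mathcal E$ with $f(1)=0$; $\breve{\mathcal C}$: convex $f\in\mathcal C$. $\mathcal D$: strictly decreasing $f\in\mathcal C$. $\mathcal D'$: $f\in\mathcal D$ continuously differentiable on $(0,1]$. $\mathcal D^\sharp$: $f\in\mathcal D'$ with $f'(1)=0$ and $\lim_{x\to0}f'(x)$ existing in $(-\infty,0]$; $\breve{\mathcal D}^\sharp:=\mathcal D^\sharp\cap\breve{\mathcal C}$. For $g\in\breve{\mathcal C}$, the stride is $\sigma(g):=\sup\{\alpha\ge0:\ \alpha-x\le\alpha g(x)\ \forall x\in[0,1]\}$. For $g\in\mathcal E$, $g^*(y):=\sup\{x\in[0,1]:g(x)\ge y\}$ (equal to $g^{-1}$ when $g\in\mathcal D$). $T$ on $\mathcal E$: $(Tf)(x)=\frac{\int_x^1f^*}{\int f}$. *)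

(* Defs.v *)
From Stdlib Require Import Reals.
From Coquelicot Require Import Coquelicot.
Open Scope R_scope.

(* Functions on [0,1] are represented as f : R -> R; only values on [0,1] matter. *)
Definition I01 (x : R) : Prop := 0 <= x <= 1.
Definition I01l (x : R) : Prop := 0 < x <= 1.

(* "decreasing" = non-increasing on [0,1] *)
Definition decreasing01 (f : R -> R) : Prop :=
  forall x y, 0 <= x -> x <= y -> y <= 1 -> f y <= f x.

Definition strictly_decreasing01 (f : R -> R) : Prop :=
  forall x y, 0 <= x -> x < y -> y <= 1 -> f y < f x.

(* integral over [0,1] (Riemann; all functions involved are monotone or continuous) *)
Definition int01 (f : R -> R) : R := RInt f 0 1.

Definition continuous_on (D : R -> Prop) (f : R -> R) : Prop :=
  forall x, D x -> filterlim f (within D (locally x)) (locally (f x)).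

Definition has_deriv_on (D : R -> Prop) (f : R -> R) (x l : R) : Prop :=
  filterlim (fun y => (f y - f x) / (y - x))
            (within (fun y => D y /\ y <> x) (locally x)) (locally l).

Definition C1_on_0_1 (f f' : R -> R) : Prop :=
  (forall x, I01l x -> has_deriv_on I01 f x (f' x)) /\ continuous_on I01l f'.

(* class E (measurability is automatic for monotone functions) *)
Definition classE (f : R -> R) : Prop :=
  decreasing01 f /\ (forall x, I01 x -> 0 <= f x) /\ f 0 = 1 /\ 0 < int01 f.

Definition classC (f : R -> R) : Prop :=
  classE f /\ continuous_on I01 f /\ f 1 = 0.

Definition convex01 (f : R -> R) : Prop :=
  forall x y t, I01 x -> I01 y -> 0 <= t <= 1 ->
    f (t * x + (1 - t) * y) <= t * f x + (1 - t) * f y.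

Definition classCbreve (f : R -> R) : Prop := classC f /\ convex01 f.

Definition classD (f : R -> R) : Prop := classC f /\ strictly_decreasing01 f.

Definition classDprime (f : R -> R) : Prop :=
  classD f /\ exists f', C1_on_0_1 f f'.

Definition classDsharp (f : R -> R) : Prop :=
  classD f /\ exists f', C1_on_0_1 f f' /\ f' 1 = 0 /\
    exists L, L <= 0 /\ filterlim f' (at_right 0) (locally L).

Definition classDsharp_breve (f : R -> R) : Prop :=
  classDsharp f /\ classCbreve f.

Definition stride (g : R -> R) : R :=
  real (Lub_Rbar (fun a => 0 <= a /\ forall x, I01 x -> a - x <= a * g x)).

Definition gstar (g : R -> R) (y : R) : R :=
  real (Lub_Rbar (fun x => I01 x /\ y <= g x)).

Definition Top (f : R -> R) (x : R) : R := RInt (gstar f) x 1 / int01 f.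

Definition solves_ode (g : R -> R) (gamma : R) : Prop :=
  (forall x, I01 x -> I01 (g x)) /\
  exists ginv : R -> R,
    (forall x, I01 x -> I01 (ginv x) /\ ginv (g x) = x /\ g (ginv x) = x) /\
    (forall x, I01l x -> has_deriv_on I01 g x (- ginv x / gamma)).

(* Main.v *)
Require Import Defs.
From Stdlib Require Import Reals.
From Coquelicot Require Import Coquelicot.
From Stdlib Require Import Lra Lia Classical.
Open Scope R_scope.


Lemma ball_R (x e y : R) : ball x e y <-> Rabs (y - x) < e.
Proof. reflexivity. Qed.

Lemma lim_eps {T} (F : (T -> Prop) -> Prop) (FF : Filter F) (f : T -> R) l :
  filterlim f F (locally l) <-> forall eps, 0 < eps -> F (fun y => Rabs (f y - l) < eps).
Proof.
  rewrite filterlim_locally. split.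
  - intros H eps He. exact (H (mkposreal eps He)).
  - intros H eps. apply (H eps (cond_pos eps)).
Qed.

Lemma within_loc_eps (D : R -> Prop) x (P : R -> Prop) :
  within D (locally x) P <-> exists d, 0 < d /\ forall y, D y -> Rabs (y - x) < d -> P y.
Proof.
  split.
  - intros [d Hd]. exists d. split. apply cond_pos. intros y Dy Hy. apply Hd; auto.
  - intros [d [Hd H]]. exists (mkposreal d Hd). intros y Hy Dy. apply H; auto.
Qed.

Lemma hd_eps (D : R -> Prop) (f : R -> R) x l : has_deriv_on D f x l <->
  forall eps, 0 < eps -> exists d, 0 < d /\ forall y, D y -> y <> x -> Rabs (y - x) < d ->
    Rabs ((f y - f x)/(y - x) - l) < eps.
Proof.
  unfold has_deriv_on. rewrite (lim_eps _ (within_filter _ _ _ _)). split.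
  - intros H eps He. destruct (proj1 (within_loc_eps _ _ _) (H eps He)) as [d [Hd H']].
    exists d; split; [exact Hd|]. intros y Dy Ny Hy. apply H'; auto.
  - intros H eps He. apply within_loc_eps. destruct (H eps He) as [d [Hd H']].
    exists d; split; [exact Hd|]. intros y [Dy Ny] Hy. apply H'; auto.
Qed.

Lemma cont_eps (D : R -> Prop) (f : R -> R) x :
  filterlim f (within D (locally x)) (locally (f x)) <->
  forall eps, 0 < eps -> exists d, 0 < d /\ forall y, D y -> Rabs (y - x) < d ->
    Rabs (f y - f x) < eps.
Proof.
  rewrite (lim_eps _ (within_filter _ _ _ _)). split.
  - intros H eps He. exact (proj1 (within_loc_eps _ _ _) (H eps He)).
  - intros H eps He. apply within_loc_eps. auto.
Qed.

Lemma gcont_eps (f : R -> R) x : continuous f x <->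
  forall eps, 0 < eps -> exists d, 0 < d /\ forall y, Rabs (y - x) < d ->
    Rabs (f y - f x) < eps.
Proof.
  unfold continuous. rewrite (lim_eps _ (@filter_filter _ _ (locally_filter _))). split.
  - intros H eps He. destruct (H eps He) as [d Hd]. exists d. split. apply cond_pos.
    intros y Hy. apply Hd. exact Hy.
  - intros H eps He. destruct (H eps He) as [d [Hd H']]. exists (mkposreal d Hd).
    intros y Hy. apply H'. exact Hy.
Qed.

Lemma scal_R (k x : R) : scal k x = k * x.
Proof. reflexivity. Qed.
Lemma plus_R (k x : R) : plus k x = k + x.
Proof. reflexivity. Qed.

Definition nonincr (f : R -> R) := forall x y, x <= y -> f y <= f x.

Lemma step_int (h : R -> R) (t : Rbar) a b :
  (forall x : R, Rbar_lt (Finite x) t -> h x = 1) -> (forall x : R, Rbar_lt t (Finite x) -> h x = 0) ->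
  ex_RInt h a b.
Proof.
  intros H1 H0.
  assert (K: forall a b, a <= b -> ex_RInt h a b).
  2:{ destruct (Rle_dec a b). apply K; auto. apply ex_RInt_swap, K; lra. }
  clear a b. intros a b Hab.
  assert (C1: forall u v, u <= v -> (forall x, u < x < v -> h x = 1) -> ex_RInt h u v).
  { intros u v Huv Hx. apply (ex_RInt_ext (fun _ => 1)). 
    intros x Hx'. rewrite Rmin_left in Hx' by lra. rewrite Rmax_right in Hx' by lra.
    symmetry; apply Hx; lra. apply ex_RInt_const. }
  assert (C0: forall u v, u <= v -> (forall x, u < x < v -> h x = 0) -> ex_RInt h u v).
  { intros u v Huv Hx. apply (ex_RInt_ext (fun _ => 0)). 
    intros x Hx'. rewrite Rmin_left in Hx' by lra. rewrite Rmax_right in Hx' by lra.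
    symmetry; apply Hx; lra. apply ex_RInt_const. }
  destruct t as [t| |].
  - destruct (Rle_dec t a).
    + apply C0; auto. intros x Hx; apply H0; simpl; lra.
    + destruct (Rle_dec b t).
      * apply C1; auto. intros x Hx; apply H1; simpl; lra.
      * apply ex_RInt_Chasles with t.
        apply C1; [lra|]. intros x Hx; apply H1; simpl; lra.
        apply C0; [lra|]. intros x Hx; apply H0; simpl; lra.
  - apply C1; auto. intros x Hx; apply H1; simpl; auto.
  - apply C0; auto. intros x Hx; apply H0; simpl; auto.
Qed.

Lemma ind_int (F : R -> R) c a b : nonincr F ->
  ex_RInt (fun x => if Rle_dec c (F x) then 1 else 0) a b.
Proof.
  intros HF.
  set (E := fun x => c <= F x).
  destruct (Lub_Rbar_correct E) as [Hub Hl].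
  apply (step_int _ (Lub_Rbar E)).
  - intros x Hx. destruct (Rle_dec c (F x)) as [|n]; auto. exfalso.
    assert (Hub2 : is_ub_Rbar E x).
    { intros e He. destruct (Rle_dec e x) as [|n2]; simpl; auto.
      exfalso; apply n. unfold E in He. apply Rle_trans with (F e); auto. apply HF; lra. }
    specialize (Hl _ Hub2). destruct (Lub_Rbar E); simpl in *; try lra; auto.
  - intros x Hx. destruct (Rle_dec c (F x)) as [r|]; auto. exfalso.
    specialize (Hub x r). destruct (Lub_Rbar E); simpl in *; try lra; auto.
Qed.

Fixpoint cnt (F : R -> R) (m : nat) (x : R) : R :=
  match m with O => 0 | S m' => cnt F m' x + (if Rle_dec (INR m) (F x) then 1 else 0) end.

Lemma cnt_int F m a b : nonincr F -> ex_RInt (cnt F m) a b.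
Proof.
  intros HF. induction m as [|m IH]; simpl.
  - apply (ex_RInt_ext (fun _ => 0)). auto. apply ex_RInt_const.
  - apply (ex_RInt_plus (cnt F m) (fun x => if Rle_dec (INR (S m)) (F x) then 1 else 0)); auto.
    apply ind_int; auto.
Qed.

Lemma cnt_bound F m x : 0 <= F x ->
  (INR m <= F x -> cnt F m x = INR m) /\ (F x < INR m -> F x - 1 < cnt F m x <= F x).
Proof.
  intros H0. induction m as [|m IH].
  - simpl; split; intros; lra.
  - destruct IH as [IH1 IH2].
    change (cnt F (S m) x) with (cnt F m x + (if Rle_dec (INR (S m)) (F x) then 1 else 0)).
    destruct (Rle_dec (INR (S m)) (F x)) as [r|r]; rewrite S_INR in *.
    + split; intros Hm; [|lra]. rewrite IH1 by lra. lra.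
    + split; intros Hm; [lra|]. rewrite Rplus_0_r. destruct (Rle_dec (INR m) (F x)).
      * rewrite IH1 by lra. lra.
      * apply IH2; lra.
Qed.

Lemma mono_int (f : R -> R) a b : nonincr f -> (forall x, 0 <= f x <= 1) -> ex_RInt f a b.
Proof.
  intros Hf Hb.
  set (A := fun (n : nat) x => cnt (fun y => INR (S n) * f y) (S n) x / INR (S n)).
  assert (HA : forall n, ex_RInt (A n) a b).
  { intros n. unfold A. apply (ex_RInt_ext (fun x => scal (/ INR (S n)) (cnt (fun y => INR (S n) * f y) (S n) x))).
    intros x _. rewrite scal_R. unfold Rdiv. apply Rmult_comm.
    apply (@ex_RInt_scal R_NormedModule (cnt (fun y => INR (S n) * f y) (S n))). apply cnt_int. intros x y Hxy.
    apply Rmult_le_compat_l. apply pos_INR. apply Hf; auto. }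
  destruct (filterlim_RInt A a b eventually eventually_filter f (fun n => RInt (A n) a b))
    as [If [_ HIf]].
  - intros n. apply RInt_correct. apply HA.
  - apply filterlim_locally. intros eps.
    destruct (archimed_cor1 eps (cond_pos eps)) as [N [HN HN0]].
    exists N. intros n Hn t. change (Rabs (A n t - f t) < eps).
    assert (Hpos : 0 < INR (S n)) by (apply lt_0_INR; lia).
    assert (HNn : INR N <= INR (S n)) by (apply le_INR; lia).
    assert (Hle : / INR (S n) <= / INR N).
    { apply Rinv_le_contravar; auto. apply lt_0_INR; lia. }
    destruct (cnt_bound (fun y => INR (S n) * f y) (S n) t) as [C1 C2].
    { apply Rmult_le_pos. apply pos_INR. apply Hb. }
    unfold A. destruct (Hb t) as [Hb0 Hb1].
    destruct (Rle_dec (INR (S n)) (INR (S n) * f t)) as [r|r].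
    + rewrite C1 by auto. assert (f t = 1).
      { apply Rle_antisym; auto. apply Rmult_le_reg_l with (INR (S n)); lra. }
      rewrite H. replace (INR (S n) / INR (S n) - 1) with 0 by (field; lra).
      rewrite Rabs_R0. apply cond_pos.
    + specialize (C2 ltac:(lra)).
      replace (cnt (fun y => INR (S n) * f y) (S n) t / INR (S n) - f t)
        with ((cnt (fun y => INR (S n) * f y) (S n) t - INR (S n) * f t) / INR (S n)) by (field; lra).
      unfold Rdiv. rewrite Rabs_mult. rewrite (Rabs_right (/ _)) by (apply Rle_ge, Rlt_le, Rinv_0_lt_compat; auto).
      apply Rle_lt_trans with (1 * / INR (S n)).
      apply Rmult_le_compat_r. apply Rlt_le, Rinv_0_lt_compat; auto.
      apply Rabs_le. lra. lra.
  - exists If; auto.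
Qed.

Lemma lub01 (E : R -> Prop) : (forall x, E x -> I01 x) ->
  (forall x, E x -> x <= real (Lub_Rbar E)) /\
  (forall u, (forall x, E x -> x <= u) -> (exists x, E x) -> real (Lub_Rbar E) <= u) /\
  0 <= real (Lub_Rbar E) <= 1 /\
  ((~ exists x, E x) -> real (Lub_Rbar E) = 0).
Proof.
  intros HE. destruct (Lub_Rbar_correct E) as [Hub Hl].
  set (L := Lub_Rbar E) in *. clearbody L.
  destruct (classic (exists x, E x)) as [[x0 Hx0]|Hn].
  - assert (H1 := Hl (Finite 1) ltac:(intros x Hx; simpl; apply HE; auto)).
    assert (H0 := Hub x0 Hx0).
    destruct (HE x0 Hx0) as [Hx0a Hx0b].
    destruct L as [l| |]; simpl in *; try tauto.
    split; [|split; [|split]].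
    + intros x Hx. exact (Hub x Hx).
    + intros u Hu _. exact (Hl (Finite u) Hu).
    + lra.
    + intros Hn; exfalso; apply Hn; eauto.
  - assert (Hm := Hl m_infty ltac:(intros x Hx; exfalso; apply Hn; eauto)).
    destruct L as [l| |]; simpl in *; try tauto.
    split; [|split; [|split]].
    + intros x Hx; exfalso; apply Hn; eauto.
    + intros u _ [x Hx]; exfalso; apply Hn; eauto.
    + lra.
    + auto.
Qed.

Lemma g_range g : classC g -> forall x, I01 x -> 0 <= g x <= 1.
Proof.
  intros [[Hd [Hp [H0 _]]] _] x Hx. split. apply Hp; auto.
  rewrite <- H0. apply Hd; unfold I01 in Hx; lra.
Qed.

Lemma gstar_spec g y : 
  (forall x, I01 x -> y <= g x -> x <= gstar g y) /\
  (forall u, (forall x, I01 x -> y <= g x -> x <= u) -> (exists x, I01 x /\ y <= g x) -> gstar g y <= u) /\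
  0 <= gstar g y <= 1 /\
  ((~ exists x, I01 x /\ y <= g x) -> gstar g y = 0).
Proof.
  unfold gstar. destruct (lub01 (fun x => I01 x /\ y <= g x)) as [H1 [H2 [H3 H4]]].
  intros x [Hx _]; auto.
  split; [|split; [|split]].
  - intros x Hx Hy. apply H1; auto.
  - intros u Hu He. apply H2; auto. intros x [Hx Hy]; auto.
  - exact H3.
  - exact H4.
Qed.

Lemma gstar_nonincr g : nonincr (gstar g).
Proof.
  intros y1 y2 Hy.
  destruct (gstar_spec g y1) as [A1 [B1 [C1 D1]]].
  destruct (gstar_spec g y2) as [A2 [B2 [C2 D2]]].
  destruct (classic (exists x, I01 x /\ y2 <= g x)) as [He|Hn].
  - apply B2; auto. intros x Hx Hgx. apply A1; auto; lra.
  - rewrite D2; auto; lra.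
Qed.

Lemma gstar_range g y : 0 <= gstar g y <= 1.
Proof. apply gstar_spec. Qed.

Lemma g_cont_eps g : classC g -> forall x, I01 x -> forall eps, 0 < eps ->
  exists d, 0 < d /\ forall y, I01 y -> Rabs (y - x) < d -> Rabs (g y - g x) < eps.
Proof.
  intros [_ [Hc _]] x Hx. apply (proj1 (cont_eps I01 g x)). apply Hc; auto.
Qed.

Lemma g_gstar g : classC g -> forall y, 0 <= y <= 1 -> I01 (gstar g y) /\ g (gstar g y) = y.
Proof.
  intros Hg y Hy.
  destruct (gstar_spec g y) as [A [B [C D]]].
  assert (He : exists x, I01 x /\ y <= g x).
  { exists 0. destruct Hg as [[_ [_ [H0 _]]] _]. split. unfold I01; lra. lra. }
  set (s := gstar g y) in *. split. exact C.
  apply Rle_antisym.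
  - destruct (Req_dec s 1) as [E1|E1].
    + rewrite E1. destruct Hg as [_ [_ H1]]. lra.
    + apply Rnot_lt_le. intros Hlt.
      destruct (g_cont_eps g Hg s C (g s - y)) as [d [Hd Hc]]; [lra|].
      set (x := Rmin (s + d/2) 1).
      assert (Hx : I01 x) by (unfold x, I01, Rmin; destruct Rle_dec; lra).
      assert (Hxs : s < x) by (unfold x, Rmin; destruct Rle_dec; lra).
      assert (Hd2 : Rabs (x - s) < d).
      { rewrite Rabs_right by lra. unfold x, Rmin; destruct Rle_dec; lra. }
      specialize (Hc x Hx Hd2). apply Rabs_lt_between in Hc.
      assert (x <= s) by (apply A; auto; lra). lra.
  - apply Rnot_lt_le. intros Hlt.
    destruct (g_cont_eps g Hg s C (y - g s)) as [d [Hd Hc]]; [lra|].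
    assert (Hex : exists e, I01 e /\ y <= g e /\ s - d/2 < e).
    { apply NNPP. intros Hn. 
      assert (s <= s - d/2); [|lra].
      apply B; auto. intros x Hx Hy'. apply Rnot_lt_le. intros Hlt'. apply Hn. eauto. }
    destruct Hex as [e [He1 [He2 He3]]].
    assert (e <= s) by (apply A; auto).
    assert (Hd2 : Rabs (e - s) < d) by (rewrite Rabs_left1 by lra; lra).
    specialize (Hc e He1 Hd2). apply Rabs_lt_between in Hc. lra.
Qed.

Lemma mono_surj_cont (phi : R -> R) : nonincr phi -> (forall y, 0 <= phi y <= 1) ->
  (forall v, 0 <= v <= 1 -> exists y, phi y = v) -> forall y0, continuous phi y0.
Proof.
  intros Hm Hb Hs y0. apply gcont_eps. intros eps He.
  set (v0 := phi y0).
  assert (L : exists z1, z1 < y0 /\ phi z1 < v0 + eps).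
  { destruct (Rle_dec (v0 + eps/2) 1).
    - destruct (Hs (v0 + eps/2)) as [z Hz]. split; [|auto]. destruct (Hb y0); unfold v0; lra.
      exists z. split; [|lra]. apply Rnot_le_lt. intros Hle. specialize (Hm _ _ Hle). fold v0 in Hm. lra.
    - exists (y0 - 1). split. lra. destruct (Hb (y0 - 1)); lra. }
  assert (U : exists z2, y0 < z2 /\ v0 - eps < phi z2).
  { destruct (Rle_dec 0 (v0 - eps/2)).
    - destruct (Hs (v0 - eps/2)) as [z Hz]. split; [auto|]. destruct (Hb y0); unfold v0; lra.
      exists z. split; [|lra]. apply Rnot_le_lt. intros Hle. specialize (Hm _ _ Hle). fold v0 in Hm. lra.
    - exists (y0 + 1). split. lra. destruct (Hb (y0 + 1)); lra. }
  destruct L as [z1 [L1 L2]]. destruct U as [z2 [U1 U2]].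
  exists (Rmin (y0 - z1) (z2 - y0)). split. apply Rmin_pos; lra.
  intros y Hy. apply Rabs_lt_between. apply Rabs_lt_between in Hy.
  assert (Hy1 := Rmin_l (y0 - z1) (z2 - y0)). assert (Hy2 := Rmin_r (y0 - z1) (z2 - y0)).
  assert (A1 : phi y <= phi z1) by (apply Hm; lra).
  assert (A2 : phi z2 <= phi y) by (apply Hm; lra).
  destruct (Rle_dec y y0).
  - assert (phi y0 <= phi y) by (apply Hm; lra). unfold v0 in *. lra.
  - assert (phi y <= phi y0) by (apply Hm; lra). unfold v0 in *. lra.
Qed.

Lemma isd_minus (f g : R -> R) x df dg : is_derive f x df -> is_derive g x dg ->
  is_derive (fun y => f y - g y) x (df - dg).
Proof. intros H1 H2. exact (@is_derive_minus R_AbsRing R_NormedModule f g x df dg H1 H2). Qed.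

Lemma isd_plus (f g : R -> R) x df dg : is_derive f x df -> is_derive g x dg ->
  is_derive (fun y => f y + g y) x (df + dg).
Proof. intros H1 H2. exact (@is_derive_plus R_AbsRing R_NormedModule f g x df dg H1 H2). Qed.

Lemma isd_mult (f g : R -> R) x df dg : is_derive f x df -> is_derive g x dg ->
  is_derive (fun y => f y * g y) x (df * g x + f x * dg).
Proof. intros H1 H2. exact (@is_derive_mult R_AbsRing f g x df dg H1 H2 Rmult_comm). Qed.

Lemma isd_comp (f g : R -> R) x df dg : is_derive f (g x) df -> is_derive g x dg ->
  is_derive (fun y => f (g y)) x (dg * df).
Proof. intros H1 H2. exact (@is_derive_comp R_AbsRing R_NormedModule f g x df dg H1 H2). Qed.

Lemma isd_id x : is_derive (fun y : R => y) x 1.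
Proof. exact (@is_derive_id R_AbsRing x). Qed.

Lemma isd_scal (f : R -> R) x k df : is_derive f x df -> is_derive (fun y => k * f y) x (k * df).
Proof. apply is_derive_scal. Qed.

Lemma isd_RInt_lo (h : R -> R) b x : (forall u v, ex_RInt h u v) -> continuous h x ->
  is_derive (fun a => RInt h a b) x (- h x).
Proof.
  intros Hi Hc. apply (@is_derive_RInt' R_NormedModule h (fun a => RInt h a b) x b); auto.
  exists (mkposreal 1 Rlt_0_1). intros y _. apply (@RInt_correct R_CompleteNormedModule). apply Hi.
Qed.

Lemma isd_RInt_up (h : R -> R) a x : (forall u v, ex_RInt h u v) -> continuous h x ->
  is_derive (fun b => RInt h a b) x (h x).
Proof.
  intros Hi Hc. apply (@is_derive_RInt R_NormedModule h (fun b => RInt h a b) a x); auto.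
  exists (mkposreal 1 Rlt_0_1). intros y _. apply (@RInt_correct R_CompleteNormedModule). apply Hi.
Qed.

Lemma cont_within (D : R -> Prop) (f : R -> R) (x : R) : continuous f x -> filterlim f (within D (locally x)) (locally (f x)).
Proof.
  intros H. apply cont_eps. intros eps He. destruct (proj1 (gcont_eps f x) H eps He) as [d [Hd H']].
  exists d; split; auto.
Qed.

Lemma isd_hd (D : R -> Prop) f x l : is_derive f x l -> has_deriv_on D f x l.
Proof.
  intros H. apply is_derive_Reals in H. apply hd_eps. intros eps He.
  destruct (H eps He) as [d Hd]. exists d. split. apply cond_pos.
  intros y Dy Ny Hy. specialize (Hd (y - x) ltac:(lra) Hy).
  replace (x + (y - x)) with y in Hd by ring. exact Hd.
Qed.

Lemma hd_interior f x l : has_deriv_on I01 f x l -> 0 < x < 1 -> is_derive f x l.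
Proof.
  intros H Hx. apply is_derive_Reals. intros eps He.
  destruct (proj1 (hd_eps _ _ _ _) H eps He) as [d [Hd H']].
  assert (Hp : 0 < Rmin d (Rmin x (1 - x))) by (repeat apply Rmin_pos; lra).
  exists (mkposreal _ Hp). intros k Hk Hk2. simpl in Hk2.
  assert (Hk3 := Rmin_l d (Rmin x (1 - x))). assert (Hk4 := Rmin_r d (Rmin x (1 - x))).
  assert (Hk5 := Rmin_l x (1 - x)). assert (Hk6 := Rmin_r x (1 - x)).
  apply Rabs_lt_between in Hk2 as Hb.
  specialize (H' (x + k)). replace (x + k - x) with k in H' by ring. apply H'.
  unfold I01; lra. lra. lra.
Qed.

Lemma hd_ext (D : R -> Prop) f1 f2 x l : (forall y, D y -> f1 y = f2 y) -> D x ->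
  has_deriv_on D f1 x l -> has_deriv_on D f2 x l.
Proof.
  intros He Dx H. apply hd_eps. intros eps Hp.
  destruct (proj1 (hd_eps _ _ _ _) H eps Hp) as [d [Hd H']].
  exists d; split; auto. intros y Dy Ny Hy. rewrite <- (He y Dy), <- (He x Dx). auto.
Qed.

Lemma hd_scal (D : R -> Prop) f x l k : has_deriv_on D f x l ->
  has_deriv_on D (fun y => k * f y) x (k * l).
Proof.
  intros H. apply hd_eps. intros eps Hp.
  destruct (proj1 (hd_eps _ _ _ _) H (eps / (Rabs k + 1))) as [d [Hd H']].
  { apply Rdiv_lt_0_compat; auto. assert (0 <= Rabs k) by apply Rabs_pos. lra. }
  exists d; split; auto. intros y Dy Ny Hy. specialize (H' y Dy Ny Hy).
  replace ((k * f y - k * f x) / (y - x) - k * l) with (k * ((f y - f x) / (y - x) - l))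
    by (field; lra).
  rewrite Rabs_mult. assert (0 <= Rabs k) by apply Rabs_pos.
  apply Rle_lt_trans with (Rabs k * (eps / (Rabs k + 1))).
  apply Rmult_le_compat_l; auto; lra.
  replace (Rabs k * (eps / (Rabs k + 1))) with (eps * (Rabs k / (Rabs k + 1))) by (field; lra).
  rewrite <- (Rmult_1_r eps) at 2. apply Rmult_lt_compat_l; auto.
  apply Rmult_lt_reg_r with (Rabs k + 1). lra. unfold Rdiv. rewrite Rmult_assoc, Rinv_l by lra. lra.
Qed.

Lemma zero_deriv (F : R -> R) a b : a <= b -> (forall t, a < t < b -> is_derive F t 0) ->
  (forall t, a <= t <= b -> continuous F t) -> F a = F b.
Proof.
  intros Hab Hd Hc. 
  assert (H1 : forall x, Rmin a b < x < Rmax a b -> is_derive F x 0).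
  { intros x Hx. rewrite Rmin_left, Rmax_right in Hx by lra. apply Hd; lra. }
  assert (H2 : forall x, Rmin a b <= x <= Rmax a b -> continuity_pt F x).
  { intros x Hx. rewrite Rmin_left, Rmax_right in Hx by lra. apply continuity_pt_filterlim. apply Hc; lra. }
  destruct (MVT_gen F a b (fun _ => 0) H1 H2) as [c [_ Hc']].
  cbv beta in Hc'. lra.
Qed.

Lemma cont_minus (f g : R -> R) x : continuous f x -> continuous g x -> continuous (fun y => f y - g y) x.
Proof. intros H1 H2. exact (@continuous_minus R_UniformSpace R_AbsRing R_NormedModule f g x H1 H2). Qed.

Lemma isd_cont (f : R -> R) x l : is_derive f x l -> continuous f x.
Proof. intros H. apply (@ex_derive_continuous R_AbsRing R_NormedModule). exists l; exact H. Qed.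

Lemma RInt_point_R (h : R -> R) a : RInt h a a = 0.
Proof. exact (@RInt_point R_CompleteNormedModule a h). Qed.

Lemma RInt_Chasles_R (h : R -> R) a b c : ex_RInt h a b -> ex_RInt h b c ->
  RInt h a b + RInt h b c = RInt h a c.
Proof. intros H1 H2. exact (@RInt_Chasles R_CompleteNormedModule h a b c H1 H2). Qed.

Lemma RInt_const_R a b c : RInt (fun _ => c) a b = (b - a) * c.
Proof. exact (@RInt_const R_CompleteNormedModule a b c). Qed.

Definition clamp x := Rmax 0 (Rmin 1 x).

Lemma clamp_I01 x : I01 (clamp x).
Proof. unfold clamp, I01, Rmax, Rmin. repeat destruct Rle_dec; lra. Qed.

Lemma clamp_id x : I01 x -> clamp x = x.
Proof. unfold clamp, I01, Rmax, Rmin. repeat destruct Rle_dec; lra. Qed.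

Lemma clamp_lip x y : Rabs (clamp y - clamp x) <= Rabs (y - x).
Proof.
  unfold clamp, Rmax, Rmin. repeat destruct Rle_dec; unfold Rabs; repeat destruct Rcase_abs; lra.
Qed.

Lemma gc_cont g : classC g -> forall x, continuous (fun y => g (clamp y)) x.
Proof.
  intros Hg x. apply gcont_eps. intros eps He.
  destruct (g_cont_eps g Hg (clamp x) (clamp_I01 x) eps He) as [d [Hd H]].
  exists d; split; auto. intros y Hy. apply H. apply clamp_I01.
  apply Rle_lt_trans with (Rabs (y - x)); auto. apply clamp_lip.
Qed.

Lemma gc_deriv g x l : has_deriv_on I01 g x l -> 0 < x < 1 -> is_derive (fun y => g (clamp y)) x l.
Proof.
  intros H Hx. apply (is_derive_ext_loc g). 
  - assert (Hp : 0 < Rmin x (1 - x)) by (apply Rmin_pos; lra).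
    exists (mkposreal _ Hp). intros y Hy. change (Rabs (y - x) < Rmin x (1 - x)) in Hy.
    assert (Hk5 := Rmin_l x (1 - x)). assert (Hk6 := Rmin_r x (1 - x)).
    apply Rabs_lt_between in Hy. rewrite clamp_id; auto. unfold I01 in *; lra.
  - apply hd_interior; auto.
Qed.

Lemma sd_gstar_g g : classC g -> strictly_decreasing01 g -> forall x, I01 x -> gstar g (g x) = x.
Proof.
  intros Hg Hs x Hx.
  destruct (gstar_spec g (g x)) as [A _].
  assert (Ax := A x Hx (Rle_refl _)).
  destruct (g_gstar g Hg (g x) (g_range g Hg x Hx)) as [Is Es].
  destruct (Rle_lt_or_eq_dec _ _ Ax) as [Lt|Eq]; auto.
  exfalso. destruct Hx. destruct Is. specialize (Hs x (gstar g (g x))). lra.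
Qed.

Lemma gstar_le0 g : classC g -> forall y, y <= 0 -> gstar g y = 1.
Proof.
  intros Hg y Hy. destruct (gstar_spec g y) as [A [_ [R _]]].
  assert (1 <= gstar g y); [|lra]. apply A. unfold I01 in *; lra.
  destruct Hg as [_ [_ H1]]. lra.
Qed.

Lemma sd_gstar_ge1 g : classC g -> strictly_decreasing01 g -> forall y, 1 <= y -> gstar g y = 0.
Proof.
  intros Hg Hs y Hy. assert (H := gstar_nonincr g 1 y Hy).
  assert (E : gstar g 1 = 0).
  { destruct Hg as [[Hd [Hp [H0 Hi]]] Hc] eqn:E. rewrite <- H0 at 1. apply sd_gstar_g; auto.
    unfold I01 in *; lra. }
  destruct (gstar_range g y). lra.
Qed.

Lemma sd_gstar_cont g : classC g -> strictly_decreasing01 g -> forall y, continuous (gstar g) y.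
Proof.
  intros Hg Hs. apply mono_surj_cont.
  - apply gstar_nonincr.
  - apply gstar_range.
  - intros v Hv. exists (g v). apply sd_gstar_g; auto.
Qed.

Lemma gstar_pos g : classC g -> forall y, 0 <= y < 1 -> 0 < gstar g y.
Proof.
  intros Hg y Hy. destruct (g_gstar g Hg y ltac:(lra)) as [I E].
  destruct I as [I0 I1]. destruct I0 as [|E0]; auto. exfalso.
  rewrite <- E0 in E. destruct Hg as [[_ [_ [H0 _]]] _]. lra.
Qed.

Lemma gstar_int g a b : ex_RInt (gstar g) a b.
Proof. apply mono_int. apply gstar_nonincr. apply gstar_range. Qed.

Lemma Tg_sd g : classC g -> (forall x, I01 x -> Top g x = g x) -> strictly_decreasing01 g.
Proof.
  intros Hg HT x y Hx Hxy Hy.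
  set (h := gstar g). set (c := int01 g).
  assert (Hc : 0 < c) by (destruct Hg as [[_ [_ [_ Hi]]] _]; exact Hi).
  assert (Ex := HT x ltac:(unfold I01 in *; lra)). assert (Ey := HT y ltac:(unfold I01 in *; lra)).
  unfold Top in Ex, Ey. fold h c in Ex, Ey.
  assert (Hi : forall u v, ex_RInt h u v) by (intros; apply gstar_int).
  rewrite <- (RInt_Chasles_R h x y 1) in Ex by auto.
  set (m := (x + y) / 2).
  rewrite <- (RInt_Chasles_R h x m y) in Ex by auto.
  assert (P1 : (m - x) * h m <= RInt h x m).
  { rewrite <- RInt_const_R. apply RInt_le. unfold m; lra. apply ex_RInt_const. auto.
    intros t Ht. apply gstar_nonincr. lra. }
  assert (P2 : 0 <= RInt h m y).
  { apply RInt_ge_0. unfold m; lra. auto. intros t Ht. apply gstar_range. }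
  assert (P3 : 0 < h m) by (apply gstar_pos; auto; unfold m; lra).
  assert (P4 : 0 < (m - x) * h m) by (apply Rmult_lt_0_compat; unfold m in *; lra).
  rewrite <- Ex, <- Ey. unfold Rdiv. apply Rmult_lt_compat_r. apply Rinv_0_lt_compat; auto. lra.
Qed.

Lemma ode_sd g gam : classC g -> solves_ode g gam -> strictly_decreasing01 g.
Proof.
  intros Hg [Hr [gi [Hgi _]]] x y Hx Hxy Hy.
  destruct Hg as [[Hd _] _]. assert (Le := Hd x y Hx (Rlt_le _ _ Hxy) Hy).
  destruct Le as [|E]; auto. exfalso.
  destruct (Hgi x ltac:(unfold I01 in *; lra)) as [_ [E1 _]].
  destruct (Hgi y ltac:(unfold I01 in *; lra)) as [_ [E2 _]].
  rewrite E in E2. lra.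
Qed.

Lemma ode_ginv g gi : classC g -> strictly_decreasing01 g ->
  (forall x, I01 x -> I01 (gi x) /\ gi (g x) = x /\ g (gi x) = x) ->
  forall y, I01 y -> gi y = gstar g y.
Proof.
  intros Hg Hs H y Hy. destruct (H y Hy) as [I [_ E]].
  rewrite <- (sd_gstar_g g Hg Hs (gi y) I). rewrite E. auto.
Qed.

Lemma ode_rep g gam : classC g -> 0 < gam -> solves_ode g gam ->
  forall x, I01 x -> RInt (gstar g) x 1 = gam * g x.
Proof.
  intros Hg Hgam Hode x Hx.
  assert (Hs := ode_sd g gam Hg Hode).
  destruct Hode as [Hr [gi [Hgi Hder]]].
  set (h := gstar g).
  assert (Hi : forall u v, ex_RInt h u v) by (intros; apply gstar_int).
  assert (Hhc : forall y, continuous h y) by (apply sd_gstar_cont; auto).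
  set (K := fun y => RInt h y 1 - gam * g (clamp y)).
  assert (KK : K x = K 1).
  { apply zero_deriv. destruct Hx; lra.
    - intros t Ht. unfold K.
      replace 0 with (- h t - gam * (- gi t / gam)).
      apply isd_minus. apply isd_RInt_lo; auto.
      apply isd_scal. apply gc_deriv; auto. apply Hder. unfold I01l, I01 in *; lra.
      unfold I01 in *; lra. rewrite (ode_ginv g gi Hg Hs Hgi t) by (unfold I01 in *; lra). fold h. field. lra.
    - intros t Ht. unfold K. apply cont_minus.
      eapply isd_cont. apply isd_RInt_lo; auto.
      apply (@continuous_scal_r R_UniformSpace R_AbsRing R_NormedModule gam (fun y => g (clamp y))).
      apply gc_cont; auto. }
  unfold K in KK. rewrite RInt_point_R in KK. rewrite clamp_id in KK by auto.
  rewrite clamp_id in KK by (unfold I01 in *; lra). destruct Hg as [_ [_ H1]]. rewrite H1 in KK. lra.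
Qed.

Lemma hd_inv (g h : R -> R) y l :
  (forall u, I01 u -> I01 (h u) /\ g (h u) = u) -> I01 y -> continuous h y ->
  has_deriv_on I01 g (h y) l -> l <> 0 -> has_deriv_on I01 h y (/ l).
Proof.
  intros Hgh Hy Hc Hd Hl. apply hd_eps. intros eps He.
  destruct (proj1 (gcont_eps (fun q => / q) l) (continuous_Rinv l Hl) eps He) as [eta [Heta Hinv]].
  destruct (proj1 (hd_eps _ _ _ _) Hd eta Heta) as [d1 [Hd1 Hq]].
  destruct (proj1 (gcont_eps h y) Hc d1 Hd1) as [d [Hdp Hh]].
  exists d. split; auto. intros y' Dy' Ny' Hy'.
  destruct (Hgh y' Dy') as [I' E']. destruct (Hgh y Hy) as [I0 E0].
  assert (Nx : h y' <> h y).
  { intros Eq. apply Ny'. rewrite <- E', <- E0, Eq. auto. }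
  assert (Nx' : h y' - h y <> 0) by lra.
  assert (Ny2 : y' - y <> 0) by lra.
  specialize (Hq (h y') I' Nx (Hh y' Hy')).
  specialize (Hinv _ Hq). cbv beta in Hinv.
  replace ((h y' - h y) / (y' - y)) with (/ ((g (h y') - g (h y)) / (h y' - h y))); auto.
  rewrite E', E0. field. split; auto.
Qed.

Lemma conv_G (h : R -> R) (Hi : forall u v, ex_RInt h u v) (Hm : nonincr h) x y t :
  x <= y -> 0 <= t <= 1 ->
  RInt h (t * x + (1 - t) * y) 1 <= t * RInt h x 1 + (1 - t) * RInt h y 1.
Proof.
  intros Hxy Ht. set (z := t * x + (1 - t) * y).
  assert (Hz1 : x <= z) by (unfold z; nra). assert (Hz2 : z <= y) by (unfold z; nra).
  rewrite <- (RInt_Chasles_R h x z 1) by auto.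
  rewrite <- (RInt_Chasles_R h z y 1) by auto.
  assert (P1 : (z - x) * h z <= RInt h x z).
  { rewrite <- RInt_const_R. apply RInt_le; auto. apply ex_RInt_const.
    intros u Hu. apply Hm. lra. }
  assert (P2 : RInt h z y <= (y - z) * h z).
  { rewrite <- RInt_const_R. apply RInt_le; auto. apply ex_RInt_const.
    intros u Hu. apply Hm. lra. }
  assert (A1 : t * ((z - x) * h z) <= t * RInt h x z) by (apply Rmult_le_compat_l; lra).
  assert (A2 : (1 - t) * RInt h z y <= (1 - t) * ((y - z) * h z)) by (apply Rmult_le_compat_l; lra).
  assert (E : t * ((z - x) * h z) = (1 - t) * ((y - z) * h z)) by (unfold z; ring).
  lra.
Qed.

Lemma at_right_cont (f : R -> R) x : continuous f x -> filterlim f (at_right x) (locally (f x)).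
Proof. intros H. apply cont_within. auto. Qed.

Definition core_hyp g gam := classC g /\ strictly_decreasing01 g /\ 0 < gam /\
  (forall x, I01 x -> RInt (gstar g) x 1 = gam * g x).

Lemma core_T g gam : core_hyp g gam -> forall x, I01 x -> / gam * RInt (gstar g) x 1 = g x.
Proof. intros [Hg [Hs [Hgam Hr]]] x Hx. rewrite Hr by auto. field. lra. Qed.

Lemma core_deriv g gam : core_hyp g gam -> forall x, I01 x ->
  has_deriv_on I01 g x ((- / gam) * gstar g x).
Proof.
  intros Hc x Hx. pose proof Hc as [Hg [Hs [Hgam Hr]]].
  apply (hd_ext I01 (fun y => / gam * RInt (gstar g) y 1)).
  - intros y Hy. apply (core_T g gam Hc y Hy).
  - auto.
  - apply isd_hd. replace ((- / gam) * gstar g x) with (/ gam * (- gstar g x)) by ring.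
    apply isd_scal. apply isd_RInt_lo. intros; apply gstar_int. apply sd_gstar_cont; auto.
Qed.

Lemma core_h01 g gam : core_hyp g gam -> gstar g 0 = 1 /\ gstar g 1 = 0.
Proof.
  intros [Hg [Hs _]]. split. apply gstar_le0; auto; lra. apply sd_gstar_ge1; auto; lra.
Qed.

Lemma core_int g gam : core_hyp g gam -> int01 g = gam.
Proof.
  intros Hc. pose proof Hc as [Hg [Hs [Hgam Hr]]].
  set (h := gstar g). set (gc := fun y => g (clamp y)).
  set (T := fun y => / gam * RInt h y 1).
  assert (Hi : forall u v, ex_RInt h u v) by (intros; apply gstar_int).
  assert (Hhc : forall y, continuous h y) by (apply sd_gstar_cont; auto).
  assert (Hgc : forall y, continuous gc y) by (apply gc_cont; auto).
  assert (Hic : forall u v, ex_RInt gc u v).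
  { intros u v. apply (@ex_RInt_continuous R_CompleteNormedModule). intros; apply Hgc. }
  assert (HT : forall t, is_derive T t (/ gam * - h t)).
  { intros t. apply isd_scal. apply isd_RInt_lo; auto. }
  assert (HTg : forall t, I01 t -> T t = g t) by (apply core_T; auto).
  set (M := fun y => RInt gc y 1 - RInt h 0 (T y) + y * T y).
  set (dM := fun t => (- gc t - (/ gam * - h t) * h (T t)) + (1 * T t + t * (/ gam * - h t))).
  assert (HM : forall t, is_derive M t (dM t)).
  { intros t. apply isd_plus. apply isd_minus. apply isd_RInt_lo; auto.
    apply (isd_comp (fun u => RInt h 0 u) T). apply isd_RInt_up; auto. auto.
    apply isd_mult. apply isd_id. auto. }
  assert (M01 : M 0 = M 1).
  { apply zero_deriv. lra.
    - intros t Ht. replace 0 with (dM t). auto.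
      unfold dM. rewrite HTg by (unfold I01; lra). unfold gc. rewrite clamp_id by (unfold I01; lra).
      unfold h. rewrite sd_gstar_g by (auto; unfold I01; lra). ring.
    - intros t _. eapply isd_cont. apply HM. }
  unfold M in M01. rewrite !HTg in M01 by (unfold I01; lra).
  pose proof Hg as [[_ [_ [H0 _]]] [_ H1]]. rewrite H0, H1 in M01.
  rewrite !RInt_point_R in M01.
  assert (E1 : RInt gc 0 1 = RInt h 0 1) by lra.
  rewrite Hr in E1 by (unfold I01; lra). rewrite H0, Rmult_1_r in E1.
  unfold int01. rewrite <- E1. apply RInt_ext. intros x Hx.
  rewrite Rmin_left, Rmax_right in Hx by lra. unfold gc. rewrite clamp_id; auto. unfold I01; lra.
Qed.

Lemma core_convex g gam : core_hyp g gam -> convex01 g.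
Proof.
  intros Hc x y t Hx Hy Ht. pose proof Hc as [Hg [Hs [Hgam Hr]]].
  assert (Hi : forall u v, ex_RInt (gstar g) u v) by (intros; apply gstar_int).
  assert (Hz : I01 (t * x + (1 - t) * y)) by (unfold I01 in *; split; nra).
  rewrite <- !(core_T g gam Hc) by auto.
  assert (Hg0 : 0 < / gam) by (apply Rinv_0_lt_compat; auto).
  destruct (Rle_dec x y).
  - assert (K := conv_G (gstar g) Hi (gstar_nonincr g) x y t r Ht).
    apply Rmult_le_compat_l with (r := / gam) in K; [|lra]. lra.
  - assert (K := conv_G (gstar g) Hi (gstar_nonincr g) y x (1 - t) ltac:(lra) ltac:(lra)).
    replace ((1 - t) * y + (1 - (1 - t)) * x) with (t * x + (1 - t) * y) in K by ring.
    apply Rmult_le_compat_l with (r := / gam) in K; [|lra]. lra.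
Qed.

Lemma core_stride g gam : core_hyp g gam -> stride g = gam.
Proof.
  intros Hc. pose proof Hc as [Hg [Hs [Hgam Hr]]].
  set (h := gstar g).
  assert (Hi : forall u v, ex_RInt h u v) by (intros; apply gstar_int).
  assert (Hg0 : g 0 = 1) by (destruct Hg as [[_ [_ [H0 _]]] _]; auto).
  assert (Key : forall x, I01 x -> gam * (1 - g x) = RInt h 0 x).
  { intros x Hx. assert (E := RInt_Chasles_R h 0 x 1 (Hi _ _) (Hi _ _)).
    rewrite !Hr in E by (unfold I01 in *; lra). rewrite Hg0 in E. lra. }
  unfold stride. rewrite (is_lub_Rbar_unique _ gam). auto.
  split.
  - intros a [Ha HA]. simpl. apply Rnot_lt_le. intros Hlt.
    assert (Hq : 0 < 1 - gam / a).
    { assert (gam / a < 1); [|lra]. apply Rmult_lt_reg_r with a. lra.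
      unfold Rdiv. rewrite Rmult_assoc, Rinv_l by lra. lra. }
    destruct (proj1 (gcont_eps h 0) (sd_gstar_cont g Hg Hs 0) _ Hq) as [d [Hd Hh]].
    set (x := Rmin (d / 2) 1).
    assert (Hx : 0 < x <= 1) by (unfold x, Rmin; destruct Rle_dec; lra).
    assert (Hxd : Rabs (x - 0) < d) by (rewrite Rabs_right; unfold x, Rmin in *; destruct Rle_dec; lra).
    specialize (Hh x Hxd). apply Rabs_lt_between in Hh.
    assert (h0 : h 0 = 1) by (apply gstar_le0; auto; lra). rewrite h0 in Hh.
    assert (I1 : x * h x <= gam * (1 - g x)).
    { rewrite Key by (unfold I01; lra). rewrite <- (Rminus_0_r x) at 1. rewrite <- RInt_const_R.
      apply RInt_le. lra. apply ex_RInt_const. auto. intros u Hu. apply gstar_nonincr. lra. }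
    assert (I2 : a * h x > gam).
    { assert (gam / a < h x) by lra. apply Rmult_lt_compat_l with (r := a) in H; [|lra].
      replace (a * (gam / a)) with gam in H by (field; lra). lra. }
    assert (I3 : a * (1 - g x) <= x) by (specialize (HA x ltac:(unfold I01; lra)); lra).
    assert (I4 : gam * (a * (1 - g x)) <= gam * x) by (apply Rmult_le_compat_l; lra).
    assert (I5 : a * (x * h x) <= a * (gam * (1 - g x))) by (apply Rmult_le_compat_l; lra).
    assert (I6 : x * gam < x * (a * h x)) by (apply Rmult_lt_compat_l; lra).
    assert (E : a * (x * h x) = x * (a * h x)) by ring.
    assert (E2 : a * (gam * (1 - g x)) = gam * (a * (1 - g x))) by ring.
    lra.
  - intros b Hb. apply Hb. split. lra. intros x Hx.
    assert (K := Key x Hx).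
    assert (RInt h 0 x <= x).
    { replace x with ((x - 0) * 1) at 2 by ring. rewrite <- RInt_const_R.
      apply RInt_le. unfold I01 in Hx; lra. auto. apply ex_RInt_const.
      intros u _. apply gstar_range. }
    lra.
Qed.

Lemma div_eq (r a b : R) : 0 < a -> r / a = b -> r = a * b.
Proof. intros Ha H. rewrite <- H. field. lra. Qed.

Lemma eq_div (r a b : R) : 0 < a -> r = a * b -> r / a = b.
Proof. intros Ha H. rewrite H. field. lra. Qed.

Lemma core_all g gam (Hc : core_hyp g gam) :
  classDsharp_breve g /\ int01 g = gam /\ stride g = gam /\
  (exists g1 g2 s1, C1_on_0_1 g g1 /\ C1_on_0_1 g1 g2 /\ C1_on_0_1 (gstar g) s1 /\
     g2 1 = 1 /\ s1 1 = - gam).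
Proof.
  pose proof Hc as [Hg [Hs [Hgam Hr]]].
  set (h := gstar g).
  assert (Hhc : forall y, continuous h y) by (apply sd_gstar_cont; auto).
  destruct (core_h01 g gam Hc) as [h0 h1]. fold h in h0, h1.
  assert (Hg0 : 0 < / gam) by (apply Rinv_0_lt_compat; auto).
  set (g1 := fun x => (- / gam) * h x).
  assert (Hg1c : forall y, continuous g1 y).
  { intros y. apply (@continuous_scal_r R_UniformSpace R_AbsRing R_NormedModule (- / gam) h). auto. }
  assert (HC1g : C1_on_0_1 g g1).
  { split. intros x Hx. apply core_deriv; auto. unfold I01l, I01 in *; lra.
    intros x _. apply cont_within; auto. }
  assert (Hhh : forall y, I01l y -> 0 < h (h y)).
  { intros y Hy. apply gstar_pos; auto. destruct (gstar_range g y) as [R0 R1]. fold h in R0, R1.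
    split; auto. destruct R1 as [|E]; auto. exfalso.
    destruct (g_gstar g Hg y ltac:(unfold I01l in *; lra)) as [_ Eg]. fold h in Eg.
    rewrite E in Eg. pose proof Hg as [_ [_ H1]]. unfold I01l in *; lra. }
  set (s1 := fun y => / ((- / gam) * h (h y))).
  assert (Hs1c : forall y, I01l y -> continuous s1 y).
  { intros y Hy. apply (continuous_Rinv_comp (fun y => (- / gam) * h (h y))).
    apply (@continuous_scal_r R_UniformSpace R_AbsRing R_NormedModule (- / gam) (fun y => h (h y))).
    apply continuous_comp; auto.
    specialize (Hhh y Hy). apply Rmult_integral_contrapositive. split; lra. }
  assert (HC1h : C1_on_0_1 h s1).
  { split.
    - intros y Hy. apply (hd_inv g h y).
      + intros u Hu. apply g_gstar; auto.
      + unfold I01l, I01 in *; lra.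
      + auto.
      + apply core_deriv; auto. apply gstar_range.
      + specialize (Hhh y Hy). apply Rmult_integral_contrapositive. split; lra.
    - intros y Hy. apply cont_within; auto. }
  set (g2 := fun y => (- / gam) * s1 y).
  assert (HC1g1 : C1_on_0_1 g1 g2).
  { split.
    - intros y Hy. apply hd_scal. apply HC1h; auto.
    - intros y Hy. apply cont_within.
      apply (@continuous_scal_r R_UniformSpace R_AbsRing R_NormedModule (- / gam) s1). auto. }
  split; [|split; [|split]].
  - split.
    + split. split; auto. exists g1. split; auto. split.
      unfold g1. rewrite h1. ring.
      exists ((- / gam) * h 0). split. rewrite h0. lra.
      exact (at_right_cont g1 0 (Hg1c 0)).
    + split; auto. apply (core_convex g gam Hc).
  - apply (core_int g gam Hc).
  - apply (core_stride g gam Hc).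
  - exists g1, g2, s1. split; auto. split; auto. split; auto. split.
    + unfold g2, s1. rewrite h1, h0. field. lra.
    + unfold s1. rewrite h1, h0. field. lra.
Qed.

Theorem proposition2p3 (g : R -> R) (Hg : classC g) :
  ((forall x, I01 x -> Top g x = g x) <-> (exists gamma, 0 < gamma /\ solves_ode g gamma)) /\
  (forall gamma, 0 < gamma -> solves_ode g gamma ->
     classDsharp_breve g /\
     int01 g = gamma /\
     stride g = gamma /\
     (exists g1 g2 s1,
        C1_on_0_1 g g1 /\ C1_on_0_1 g1 g2 /\ C1_on_0_1 (gstar g) s1 /\
        g2 1 = 1 /\ s1 1 = - gamma)).
Proof.
  assert (Hode_core : forall gam, 0 < gam -> solves_ode g gam -> core_hyp g gam).
  { intros gam Hgam Hode. split; auto. split. apply (ode_sd g gam); auto. split; auto.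
    apply ode_rep; auto. }
  split.
  - split.
    + intros HT. assert (Hs := Tg_sd g Hg HT).
      set (gam := int01 g).
      assert (Hgam : 0 < gam) by (pose proof Hg as [[_ [_ [_ Hi]]] _]; exact Hi).
      assert (Hc : core_hyp g gam).
      { split; auto. split; auto. split; auto. intros x Hx. specialize (HT x Hx).
        unfold Top in HT. fold gam in HT. apply div_eq; auto. }
      exists gam. split; auto. split.
      * intros x Hx. pose proof (g_range g Hg x Hx). unfold I01; lra.
      * exists (gstar g). split.
        -- intros x Hx. split. pose proof (gstar_range g x). unfold I01; lra. split.
           apply sd_gstar_g; auto. apply g_gstar; auto.
        -- intros x Hx. replace (- gstar g x / gam) with ((- / gam) * gstar g x) by (field; lra).
           apply core_deriv; auto. unfold I01l, I01 in *; lra.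
    + intros [gam [Hgam Hode]] x Hx. assert (Hc := Hode_core gam Hgam Hode).
      unfold Top. rewrite (core_int g gam Hc). apply eq_div; auto. apply (ode_rep g gam Hg Hgam Hode x Hx).
  - intros gam Hgam Hode. apply core_all. auto.
Qed.
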